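(* Let $H$ and $K$ be subgroups of a finite group $G$, and suppose $H\not\le C_G(K)$. Then $\Pr(H,K)\le \frac{n+m-1}{nm}$, where $n=|H:C_H(K)|$ and $m=\min_{x\in H\setminus C_H(K)}|K:C_K(x)|$.
   Context: For subsets $X,Y$ of a finite group, $\Pr(X,Y)=|\{(x,y)\in X\times Y: xy=yx\}|/(|X||Y|)$. $C_H(K)$ is the set of elements of $H$ commuting with every element of $K$; $C_K(x)$ the set of elements of $K$ commuting with $x$. *)

(* Defs.v *)
From mathcomp Require Import all_boot all_order all_algebra all_fingroup.
Set Implicit Arguments. Unset Strict Implicit. Unset Printing Implicit Defensive.
Import GRing.Theory Num.Theory.
Local Open Scope group_scope.

Definition commPr (gT : finGroupType) (X Y : {set gT}) : rat :=
  (#|[set p in setX X Y | ((p.1 * p.2)%g == (p.2 * p.1)%g)]|%:R / (#|X| * #|Y|)%:R)%R.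

(* m = min_{x in H \ C_H(K)} |K : C_K(x)|  (the default #|K| is an upper bound
   of every index, so it does not affect the minimum on a nonempty range). *)
Definition min_index (gT : finGroupType) (H K : {group gT}) : nat :=
  \big[minn/#|K|]_(x in H :\: 'C_H(K)) #|K : 'C_K[x]|.

(* Main.v *)
Require Import Defs.
From mathcomp Require Import all_boot all_order all_algebra all_fingroup.
From mathcomp Require Import zify.
Import GRing.Theory Num.Theory.
Local Open Scope group_scope.

Lemma cnt_comm (gT : finGroupType) (H K : {group gT}) :
  #|[set p in setX H K | ((p.1 * p.2)%g == (p.2 * p.1)%g)]| =
  (\sum_(x in H) #|'C_K[x]|)%N.
Proof.
rewrite -sum1_card.
rewrite (eq_bigl (fun p => (p.1 \in H) && ((p.2 \in K) && (p.1 * p.2 == p.2 * p.1))));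
  last by move=> [x y]; rewrite !inE /= andbA.
rewrite -(pair_big_dep (fun x => x \in H) (fun x y => (y \in K) && (x * y == y * x)) (fun _ _ => 1%N)) /=.
apply: eq_bigr => x _.
rewrite -sum1_card; apply: eq_bigl => y.
by rewrite in_setI cent1E eq_sym.
Qed.

Lemma bigminn_le (I : finType) (P : pred I) (F : I -> nat) d i :
  P i -> (\big[minn/d]_(j | P j) F j <= F i)%N.
Proof.
move=> Pi; rewrite -big_filter.
have : i \in filter P (index_enum I) by rewrite mem_filter Pi mem_index_enum.
elim: (filter P _) => //= a s IH; rewrite big_cons inE => /orP [/eqP ->| /IH h].
  exact: geq_minl.
exact: leq_trans (geq_minr _ _) h.
Qed.

Lemma arith4 (a b c d : nat) : (a * b * c * d = c * (a * d * b))%N.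
Proof. by lia. Qed.

Theorem lemma2p4 (gT : finGroupType) (G H K : {group gT})
  (sHG : H \subset G) (sKG : K \subset G) (nHC : ~~ (H \subset 'C_G(K))) :
  let n := #|H : 'C_H(K)| in
  let m := min_index H K in
  (commPr H K <= ((n + m - 1)%:R / (n * m)%:R : rat))%R.
Proof.
cbv zeta.
set n := #|H : 'C_H(K)|.
set m := min_index H K.
set C := 'C_H(K)%G.
have sCH : C \subset H by apply: subsetIl.
have [x0 Hx0 nx0] : exists2 x0, x0 \in H & x0 \notin C.
  apply/exists_inP; rewrite -negb_forall_in; apply/negP => /forall_inP hx.
  move/negP: nHC; apply; apply/subsetP => y Hy.
  by move: (hx y Hy); rewrite !inE (subsetP sHG) //; case/andP.
have mle : forall x, x \in H :\: C -> (m <= #|K : 'C_K[x]|)%N.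
  move=> x hx; exact: bigminn_le.
have mpos : (0 < m)%N.
  rewrite /m /min_index; apply: (big_ind (fun k => 0 < k)%N) => //.
  - by move=> a b a0 b0; rewrite leq_min a0 b0.
have npos : (0 < n)%N by apply: indexg_gt0.
have HC : #|H| = (#|C| * n)%N by rewrite (Lagrange sCH).
have key : (#|[set p in setX H K | ((p.1 * p.2)%g == (p.2 * p.1)%g)]| * m
            <= #|C| * #|K| * (n + m - 1))%N.
  rewrite cnt_comm big_distrl /= (bigID (fun x => x \in C)) /=.
  rewrite (eq_bigl (fun x => x \in C)); last first.
    by move=> x; case xC: (x \in C); rewrite ?andbT ?andbF // (subsetP sCH).
  rewrite [X in (_ + X <= _)%N](eq_bigl (fun x => x \in H :\: C)); last by move=> x /=; rewrite in_setD andbC.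
  rewrite [X in (X + _ <= _)%N](eq_bigr (fun _ => #|K| * m)%N); last first.
    move=> x xC; rewrite (setIidPl _) //.
    by rewrite sub_cent1; move: xC; rewrite inE => /andP[].
  have e2 : (\sum_(i in H :\: C) #|'C_K[i]| * m <= \sum_(i in H :\: C) #|K|)%N.
    apply: leq_sum => x hx.
    by rewrite -(Lagrange (subsetIl K 'C[x])) leq_mul2l mle // orbT.
  apply: leq_trans (leq_add (leqnn _) e2) _.
  rewrite !sum_nat_const cardsD (setIidPr sCH) HC.
  change #|'C_H(K)| with #|C|.
  move: #|C| #|K| npos mpos => c k np mp.
  rewrite (_ : n + m - 1 = m + (n - 1))%N; last by lia.
  have -> : (c * n - c = c * (n - 1))%N by rewrite mulnBr muln1.
  rewrite mulnDr mulnA [(c * (n - 1) * k)%N]mulnAC.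
  by [].
rewrite /commPr.
move: key; set N := #|_| => key.
have Apos : (0 < #|H| * #|K|)%N by rewrite muln_gt0 !cardG_gt0.
rewrite ler_pdivrMr ?ltr0n // mulrAC ler_pdivlMr ?ltr0n ?muln_gt0 ?npos ?mpos //.
rewrite -!natrM ler_nat HC.
rewrite (mulnC n) mulnA; apply: leq_trans (leq_mul key (leqnn n)) _.
by apply: eq_leq; apply: arith4.
Qed.
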